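(* For any integer $m\ge1$ there exists $\varepsilon>0$ small enough such that on $I(m,\varepsilon)$, with $f_1,f_2,f_3$ the first three eigenfunctions of the Laplacian: (a) the first three eigenvalues are simple; (b) $f_2\circ\psi=-f_2$ and $N(f_2)=m$; (c) $f_3\circ\psi=f_3$ and $N(f_3)=2$.
   Context: $I(m,\varepsilon)$ is the metric graph with vertices $v_1,v_2,v_3,v_4$, an edge $e_1$ of length $1/2$ from $v_1$ to $v_2$, an edge $e_2$ of length $1/2$ from $v_3$ to $v_4$, and $m$ parallel edges of length $\varepsilon$ joining $v_2$ and $v_3$. The Laplacian $-\frac{d^2}{dx^2}$ acts edgewise with Dirichlet conditions at $v_1,v_4$ and Neumann–Kirchhoff conditions (continuity and vanishing sum of outgoing derivatives) at $v_2,v_3$; eigenvalues are ordered increasingly with multiplicity, with $L^2$-orthogonal eigenfunctions $f_1,f_2,\dots$. $\psi:I(m,\varepsilon)\to I(m,\varepsilon)$ is the reflection symmetry exchanging $v_1\leftrightarrow v_4$, $v_2\leftrightarrow v_3$, mapping $e_1$ isometrically onto $e_2$ and each small edge onto itself with orientation reversed. $N(f)$ is the number of zeroes of $f$ other than at $v_1,v_4$. *)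

(* Defs.v *)
From Stdlib Require Import Reals Lra List.
From Coquelicot Require Import Coquelicot.
Open Scope R_scope.

(* A function on the metric graph I(m,eps), given edgewise.
   e1 : coordinate x in [0,1/2], x = 0 is v1, x = 1/2 is v2.
   e2 : coordinate x in [0,1/2], x = 0 is v3, x = 1/2 is v4.
   small edge k (k < m) : coordinate x in [0,eps], x = 0 is v2, x = eps is v3. *)
Record gfun := mkGfun { ge1 : R -> R; ge2 : R -> R; gs : nat -> R -> R }.

Definition gzero : gfun := mkGfun (fun _ => 0) (fun _ => 0) (fun _ _ => 0).
Definition gscale (c : R) (f : gfun) : gfun :=
  mkGfun (fun x => c * ge1 f x) (fun x => c * ge2 f x) (fun k x => c * gs f k x).
Definition gopp (f : gfun) : gfun := gscale (-1) f.

Definition geq (m : nat) (eps : R) (f g : gfun) : Prop :=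
  (forall x, 0 <= x <= 1/2 -> ge1 f x = ge1 g x) /\
  (forall x, 0 <= x <= 1/2 -> ge2 f x = ge2 g x) /\
  (forall k, (k < m)%nat -> forall x, 0 <= x <= eps -> gs f k x = gs g k x).

Definition psi_comp (eps : R) (f : gfun) : gfun :=
  mkGfun (fun x => ge2 f (1/2 - x)) (fun x => ge1 f (1/2 - x))
         (fun k x => gs f k (eps - x)).

Definition sumk (m : nat) (F : nat -> R) : R :=
  fold_right Rplus 0 (map F (seq 0 m)).

(* edgewise equation  -u'' = lam u  (solutions are smooth; we take the
   unique smooth extension to the whole line). *)
Definition edge_ode (lam : R) (u : R -> R) : Prop :=
  forall x, ex_derive u x /\ ex_derive (Derive u) x /\
            - Derive (Derive u) x = lam * u x.

(* f is an eigenfunction (possibly zero) of the Laplacian on I(m,eps) with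
   Dirichlet conditions at v1, v4 and Neumann-Kirchhoff conditions at v2, v3,
   for the eigenvalue lam. *)
Definition is_eigfun (m : nat) (eps lam : R) (f : gfun) : Prop :=
  edge_ode lam (ge1 f) /\ edge_ode lam (ge2 f) /\
  (forall k, (k < m)%nat -> edge_ode lam (gs f k)) /\
  ge1 f 0 = 0 /\ ge2 f (1/2) = 0 /\
  (forall k, (k < m)%nat -> gs f k 0 = ge1 f (1/2)) /\
  (forall k, (k < m)%nat -> gs f k eps = ge2 f 0) /\
  (* Kirchhoff at v2: sum of outgoing derivatives vanishes *)
  - Derive (ge1 f) (1/2) + sumk m (fun k => Derive (gs f k) 0) = 0 /\
  Derive (ge2 f) 0 - sumk m (fun k => Derive (gs f k) eps) = 0.

Definition is_eigenvalue (m : nat) (eps lam : R) : Prop :=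
  exists f, is_eigfun m eps lam f /\ ~ geq m eps f gzero.

Definition simple_eig (m : nat) (eps lam : R) (f : gfun) : Prop :=
  is_eigfun m eps lam f /\ ~ geq m eps f gzero /\
  forall g, is_eigfun m eps lam g -> exists c, geq m eps g (gscale c f).

(* Points of I(m,eps) other than v1, v4, each with a unique representative:
   v2 is PE1 (1/2), v3 is PE2 0, small edges contribute interior points. *)
Inductive gpoint := PE1 (x : R) | PE2 (x : R) | PS (k : nat) (x : R).

Definition valid_pt (m : nat) (eps : R) (p : gpoint) : Prop :=
  match p with
  | PE1 x => 0 < x <= 1/2
  | PE2 x => 0 <= x < 1/2
  | PS k x => (k < m)%nat /\ 0 < x < eps
  end.

Definition geval (f : gfun) (p : gpoint) : R :=
  match p with
  | PE1 x => ge1 f x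
  | PE2 x => ge2 f x
  | PS k x => gs f k x
  end.

Definition num_zeros (m : nat) (eps : R) (f : gfun) (n : nat) : Prop :=
  exists l : list gpoint, NoDup l /\ length l = n /\
    forall p, In p l <-> (valid_pt m eps p /\ geval f p = 0).

(* Main.v *)
Require Import Defs.
From Stdlib Require Import Reals List Lra Lia.
From Coquelicot Require Import Coquelicot.
Open Scope R_scope.

Lemma dmul (f g : R -> R) (x df dg : R) : is_derive f x df -> is_derive g x dg ->
  is_derive (fun t => f t * g t) x (df * g x + f x * dg).
Proof. intros h1 h2. apply (is_derive_mult f g x df dg h1 h2). intros; apply Rmult_comm. Qed.

Lemma dplus (f g : R -> R) (x df dg : R) : is_derive f x df -> is_derive g x dg ->
  is_derive (fun t => f t + g t) x (df + dg).
Proof. intros h1 h2. apply (is_derive_plus f g x df dg h1 h2). Qed.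

Lemma dminus (f g : R -> R) (x df dg : R) : is_derive f x df -> is_derive g x dg ->
  is_derive (fun t => f t - g t) x (df - dg).
Proof. intros h1 h2. apply (is_derive_minus f g x df dg h1 h2). Qed.

Lemma dval (f : R -> R) (x l l' : R) : is_derive f x l -> l = l' -> is_derive f x l'.
Proof. intros h e; subst; auto. Qed.

Lemma ode_d1 lam u (H : edge_ode lam u) x : is_derive u x (Derive u x).
Proof. apply Derive_correct. apply H. Qed.

Lemma ode_d2 lam u (H : edge_ode lam u) x : is_derive (Derive u) x (- lam * u x).
Proof. destruct (H x) as [_ [h2 h3]].
  replace (-lam * u x) with (Derive (Derive u) x) by lra. apply Derive_correct; auto. Qed.

Lemma const_deriv0 (E : R -> R) : (forall t, is_derive E t 0) -> forall a b, E a = E b.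
Proof.
  intros h a b. destruct (Rtotal_order a b) as [l|[e|l]].
  - apply (eq_is_derive E a b); auto.
  - subst; auto.
  - symmetry; apply (eq_is_derive E b a); auto.
Qed.

Lemma ode_sol k u (hk : 0 < k) (H : edge_ode (k*k) u) x0 x :
  u x = u x0 * cos (k*(x-x0)) + Derive u x0 / k * sin (k*(x-x0)).
Proof.
  set (a := u x0). set (d := Derive u x0).
  set (w := fun t => u t - (a * cos (k*(t-x0)) + d / k * sin (k*(t-x0)))).
  set (w1 := fun t => Derive u t - (- a * k * sin (k*(t-x0)) + d * cos (k*(t-x0)))).
  assert (Dw : forall t, is_derive w t (w1 t)).
  { intro t. unfold w, w1. apply dminus. apply (ode_d1 _ _ H).
    auto_derive; auto. unfold Rminus. field. lra. }
  assert (Dw1 : forall t, is_derive w1 t (- (k*k) * w t)).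
  { intro t. unfold w1. eapply dval. apply dminus. apply (ode_d2 _ _ H).
    auto_derive; auto. unfold w. unfold Rminus. field. lra. }
  set (E := fun t => w1 t * w1 t + k * k * (w t * w t)).
  assert (DE : forall t, is_derive E t 0).
  { intro t. unfold E. eapply dval. apply dplus. apply dmul; apply Dw1.
    apply is_derive_scal. apply dmul; apply Dw. ring. }
  pose proof (const_deriv0 E DE x0 x) as e.
  assert (E x0 = 0).
  { unfold E, w, w1, a, d. replace (x0 - x0) with 0 by ring.
    rewrite Rmult_0_r, cos_0, sin_0. field. lra. }
  assert (w x = 0).
  { rewrite H0 in e. unfold E in e. assert (0 <= w1 x * w1 x) by nra. assert (0 < k*k) by nra.
    assert (0 <= w x * w x) by nra.
    assert (hw : w x * w x = 0).
    { assert (0 <= k*k*(w x*w x)) by (apply Rmult_le_pos; lra).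
      apply Rmult_eq_reg_l with (k*k); lra. }
    destruct (Rmult_integral _ _ hw); auto. }
  unfold w in H1. lra.
Qed.

Lemma sumk_S m F : sumk (S m) F = sumk m F + F m.
Proof. unfold sumk. rewrite seq_S, map_app, fold_right_app. simpl.
  induction (map F (seq 0 m)) as [|h t IH]; simpl; [ring | rewrite IH; ring]. Qed.

Lemma sumk_ext m F G : (forall j, (j < m)%nat -> F j = G j) -> sumk m F = sumk m G.
Proof. induction m; intros h. reflexivity. rewrite !sumk_S, IHm, h; auto. Qed.

Lemma sumk_const m F a : (forall j, (j < m)%nat -> F j = a) -> sumk m F = INR m * a.
Proof. induction m; intros h. unfold sumk; simpl; ring. rewrite sumk_S, IHm, h; auto. rewrite S_INR; ring. Qed.

Lemma sumk_lin m F G b a : sumk m (fun j => b * F j - a * G j) = b * sumk m F - a * sumk m G.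
Proof. induction m. unfold sumk; simpl; ring. rewrite !sumk_S, IHm; ring. Qed.

Lemma sumk_nonneg m F : (forall j, (j < m)%nat -> 0 <= F j) -> 0 <= sumk m F.
Proof. induction m; intros h. unfold sumk; simpl; lra. rewrite sumk_S. assert (0 <= F m) by auto.
  assert (0 <= sumk m F) by auto. lra. Qed.

Lemma sumk_zero m F : (forall j, (j < m)%nat -> 0 <= F j) -> sumk m F = 0 ->
  forall j, (j < m)%nat -> F j = 0.
Proof. induction m; intros h e j hj. lia. rewrite sumk_S in e.
  assert (0 <= F m) by auto. assert (0 <= sumk m F) by (apply sumk_nonneg; auto).
  destruct (Nat.eq_dec j m). subst; lra. apply IHm; auto; try lra. lia. Qed.

Lemma cont_of_ode lam u (H : edge_ode lam u) x : continuity_pt u x.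
Proof. apply continuity_pt_filterlim. apply (ex_derive_continuous (K:=R_AbsRing) (V:=R_NormedModule) u x). apply H. Qed.

Lemma mono_phi lam u (hl : lam <= 0) (H : edge_ode lam u) x y : x <= y ->
  u x * Derive u x <= u y * Derive u y.
Proof.
  intros hxy. set (phi := fun t => u t * Derive u t).
  assert (D : forall t, is_derive phi t (Derive u t * Derive u t + u t * (- lam * u t))).
  { intro t. apply dmul. apply (ode_d1 _ _ H). apply (ode_d2 _ _ H). }
  destruct (MVT_gen phi x y (fun t => Derive u t * Derive u t + u t * (- lam * u t))) as [c [hc e]].
  { intros; apply D. }
  { intros. apply continuity_pt_filterlim. apply (ex_derive_continuous (K:=R_AbsRing) (V:=R_NormedModule)). eexists; apply D. }
  change (phi x <= phi y).
  assert (0 <= Derive u c * Derive u c + u c * (- lam * u c)) by nra. nra.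
Qed.

Lemma flat lam u (hl : lam <= 0) (H : edge_ode lam u) a b : a < b ->
  u a * Derive u a = u b * Derive u b -> forall y, a <= y <= b -> u y = u a.
Proof.
  intros hab e.
  set (phi := fun t => u t * Derive u t).
  assert (Dphi : forall t, is_derive phi t (Derive u t * Derive u t + u t * (- lam * u t))).
  { intro t. apply dmul. apply (ode_d1 _ _ H). apply (ode_d2 _ _ H). }
  assert (C : forall y, a <= y <= b -> phi y = phi a).
  { intros y hy. pose proof (mono_phi lam u hl H a y (proj1 hy)).
    pose proof (mono_phi lam u hl H y b (proj2 hy)). unfold phi in *. lra. }
  assert (Z : forall x, a < x < b -> Derive u x = 0).
  { intros x hx.
    assert (is_derive phi x 0).
    { apply is_derive_ext_loc with (fun _ => phi a).
      - assert (hd : 0 < Rmin (x - a) (b - x)) by (apply Rmin_pos; lra).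
        exists (mkposreal _ hd). intros t ht. simpl in ht.
        change (Rabs (t - x) < Rmin (x - a) (b - x)) in ht.
        apply Rabs_def2 in ht. pose proof (Rmin_l (x-a) (b-x)). pose proof (Rmin_r (x-a) (b-x)).
        symmetry; apply C; lra.
      - apply (is_derive_const (K:=R_AbsRing) (V:=R_NormedModule)). }
    pose proof (is_derive_unique _ _ _ H0) as e1.
    rewrite (is_derive_unique _ _ _ (Dphi x)) in e1.
    assert (0 <= u x * (- lam * u x)) by nra. nra. }
  intros y hy. destruct (Req_dec y a) as [->|hya]. reflexivity.
  destruct (MVT_gen u a y (fun _ => 0)) as [c [hc e2]].
  { intros t ht. rewrite Rmin_left in ht by lra. rewrite Rmax_right in ht by lra.
    rewrite <- (Z t) by lra. apply (ode_d1 _ _ H). }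
  { intros; apply (cont_of_ode _ _ H). }
  lra.
Qed.

Lemma no_nonpos m eps lam g (he : 0 < eps) (hl : lam <= 0) :
  is_eigfun m eps lam g -> geq m eps g gzero.
Proof.
  intros [o1 [o2 [os [b1 [b2 [c2 [c3 [k2 k3]]]]]]]].
  set (u1 := ge1 g) in *. set (u2 := ge2 g) in *.
  set (a := u1 (1/2)) in *. set (b := u2 0) in *.
  assert (I1 : u1 0 * Derive u1 0 <= u1 (1/2) * Derive u1 (1/2)) by (apply (mono_phi lam); auto; lra).
  assert (I2 : u2 0 * Derive u2 0 <= u2 (1/2) * Derive u2 (1/2)) by (apply (mono_phi lam); auto; lra).
  assert (Ij : forall j, (j < m)%nat -> 0 <= b * Derive (gs g j) eps - a * Derive (gs g j) 0).
  { intros j hj. pose proof (mono_phi lam (gs g j) hl (os j hj) 0 eps ltac:(lra)).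
    rewrite c2, c3 in H by auto. fold a b in H. lra. }
  assert (S : sumk m (fun j => b * Derive (gs g j) eps - a * Derive (gs g j) 0)
              = b * sumk m (fun j => Derive (gs g j) eps) - a * sumk m (fun j => Derive (gs g j) 0)).
  { apply (sumk_lin m (fun j => Derive (gs g j) eps) (fun j => Derive (gs g j) 0)). }
  rewrite b1 in I1. rewrite b2 in I2. fold a in I1. fold b in I2.
  assert (tot : (a * Derive u1 (1/2) - 0 * Derive u1 0) + (0 * Derive u2 (1/2) - b * Derive u2 0)
     + sumk m (fun j => b * Derive (gs g j) eps - a * Derive (gs g j) 0) = 0).
  { rewrite S. fold u1 u2 in k2, k3. nra. }
  pose proof (sumk_nonneg _ _ Ij).
  assert (e1 : 0 * Derive u1 0 = a * Derive u1 (1/2)) by lra.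
  assert (e2 : u2 0 * Derive u2 0 = 0 * Derive u2 (1/2)) by (fold b; lra).
  assert (e3 : sumk m (fun j => b * Derive (gs g j) eps - a * Derive (gs g j) 0) = 0) by lra.
  pose proof (sumk_zero _ _ Ij e3) as e4.
  assert (F1 : forall x, 0 <= x <= 1/2 -> u1 x = 0).
  { intros x hx. rewrite (flat lam u1 hl o1 0 (1/2)); auto; try lra. rewrite b1. fold a. lra. }
  assert (F2 : forall x, 0 <= x <= 1/2 -> u2 x = 0).
  { assert (hc : forall y, 0 <= y <= 1/2 -> u2 y = u2 0).
    { intros y hy. apply (flat lam u2 hl o2 0 (1/2)); auto; try lra. rewrite b2. fold b; lra. }
    intros x hx. rewrite hc by lra. rewrite <- (hc (1/2)) by lra. exact b2. }
  split; [|split].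
  - intros; simpl; apply F1; auto.
  - intros; simpl; apply F2; auto.
  - intros j hj x hx. simpl. rewrite (flat lam (gs g j) hl (os j hj) 0 eps); auto; try lra.
    rewrite c2 by auto. apply F1; lra.
    rewrite c2, c3 by auto. fold a b. pose proof (e4 j hj). simpl in H0.
    assert (a = 0) by (unfold a; apply F1; lra). assert (b = 0) by (unfold b; apply F2; lra).
    subst a b. rewrite H1, H2. ring.
Qed.

Definition Ef m eps th := cos th * cos (eps*th) - INR m * sin th * sin (eps*th).
Definition Of m eps th := cos th * sin (eps*th) + INR m * sin th * cos (eps*th).

Lemma alg1 A D k c s ch sh M : k <> 0 -> ch <> 0 -> sh <> 0 ->
  - (A * k * c) + M * (k * ((A + D) * s / (2 * ch) * sh + (D - A) * s / (2 * sh) * ch)) = 0 ->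
  - D * k * c - M * (k * (- ((A + D) * s / (2 * ch)) * sh + (D - A) * s / (2 * sh) * ch)) = 0 ->
  (A + D) * (c * ch - M * s * sh) = 0 /\ (A - D) * (c * sh + M * s * ch) = 0.
Proof.
  intros hk hc hs e2 e3. split.
  - apply Rmult_eq_reg_l with k; auto.
    transitivity (- ch * ((- (A * k * c) + M * (k * ((A + D) * s / (2 * ch) * sh + (D - A) * s / (2 * sh) * ch)))
      + (- D * k * c - M * (k * (- ((A + D) * s / (2 * ch)) * sh + (D - A) * s / (2 * sh) * ch))))).
    field; auto. rewrite e2, e3. ring.
  - apply Rmult_eq_reg_l with k; auto.
    transitivity (- sh * ((- (A * k * c) + M * (k * ((A + D) * s / (2 * ch) * sh + (D - A) * s / (2 * sh) * ch)))
      - (- D * k * c - M * (k * (- ((A + D) * s / (2 * ch)) * sh + (D - A) * s / (2 * sh) * ch))))).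
    field; auto. rewrite e2, e3. ring.
Qed.

Lemma structure m eps th g (hth : 0 < th) (he : 0 < eps) (hh : eps * th < PI/2) :
  is_eigfun m eps ((2*th)*(2*th)) g ->
  exists A D, (forall x, ge1 g x = A * sin (2*th*x)) /\
    (forall x, ge2 g x = D * sin (2*th*(1/2 - x))) /\
    (forall j x, (j < m)%nat -> gs g j x =
        (A+D) * sin th / (2 * cos (eps*th)) * cos (2*th*(x - eps/2))
      + (D-A) * sin th / (2 * sin (eps*th)) * sin (2*th*(x - eps/2))) /\
    (A + D) * Ef m eps th = 0 /\ (A - D) * Of m eps th = 0.
Proof.
  intros [o1 [o2 [os [b1 [b2 [c2 [c3 [k2 k3]]]]]]]].
  assert (hk : 0 < 2*th) by lra.
  assert (hsh : 0 < sin (eps*th)) by (apply sin_gt_0; nra).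
  assert (hch : 0 < cos (eps*th)) by (apply cos_gt_0; nra).
  set (A := Derive (ge1 g) 0 / (2*th)).
  set (D := - Derive (ge2 g) (1/2) / (2*th)).
  assert (U1 : forall x, ge1 g x = A * sin (2*th*x)).
  { intro x. rewrite (ode_sol (2*th) (ge1 g) hk o1 0 x), b1. unfold A.
    replace (x - 0) with x by ring. ring. }
  assert (U2 : forall x, ge2 g x = D * sin (2*th*(1/2 - x))).
  { intro x. rewrite (ode_sol (2*th) (ge2 g) hk o2 (1/2) x), b2. unfold D.
    replace (2*th*(x - 1/2)) with (- (2*th*(1/2-x))) by ring. rewrite sin_neg. field. lra. }
  set (P := (A+D) * sin th / (2 * cos (eps*th))).
  set (Q := (D-A) * sin th / (2 * sin (eps*th))).
  assert (US : forall j x, (j < m)%nat -> gs g j x = P * cos (2*th*(x - eps/2)) + Q * sin (2*th*(x - eps/2))).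
  { intros j x hj.
    set (p := gs g j (eps/2)). set (q := Derive (gs g j) (eps/2) / (2*th)).
    assert (S : forall y, gs g j y = p * cos (2*th*(y - eps/2)) + q * sin (2*th*(y - eps/2))).
    { intro y. apply (ode_sol (2*th) (gs g j) hk (os j hj)). }
    pose proof (c2 j hj) as e0. pose proof (c3 j hj) as e1.
    rewrite S, U1 in e0. rewrite S, U2 in e1.
    replace (2*th*(0 - eps/2)) with (- (eps*th)) in e0 by field.
    replace (2*th*(eps - eps/2)) with (eps*th) in e1 by field.
    replace (2*th*(1/2)) with th in e0 by field.
    replace (2*th*(1/2 - 0)) with th in e1 by field.
    rewrite cos_neg, sin_neg in e0.
    assert (hp : p = P) by (unfold P; field_simplify_eq; [nra | lra]).
    assert (hq : q = Q) by (unfold Q; field_simplify_eq; [nra | lra]).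
    rewrite S, hp, hq. reflexivity. }
  exists A, D. split; [exact U1|split; [exact U2|split; [exact US|]]].
  assert (d1 : Derive (ge1 g) (1/2) = A * (2*th) * cos th).
  { rewrite (Derive_ext _ _ _ U1). apply is_derive_unique. auto_derive; auto.
    replace (2*th*(1/2)) with th by field. ring. }
  assert (d2 : Derive (ge2 g) 0 = - D * (2*th) * cos th).
  { rewrite (Derive_ext _ _ _ U2). apply is_derive_unique. auto_derive; auto.
    replace (2*th*(1/2 + - 0)) with th by field. ring. }
  assert (ds0 : forall j, (j < m)%nat -> Derive (gs g j) 0 = (2*th) * (P * sin (eps*th) + Q * cos (eps*th))).
  { intros j hj. rewrite (Derive_ext _ _ _ (fun x => US j x hj)). apply is_derive_unique. auto_derive; auto.
    replace (2*th*(0 + - (eps/2))) with (- (eps*th)) by field. rewrite cos_neg, sin_neg. ring. }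
  assert (dse : forall j, (j < m)%nat -> Derive (gs g j) eps = (2*th) * (- P * sin (eps*th) + Q * cos (eps*th))).
  { intros j hj. rewrite (Derive_ext _ _ _ (fun x => US j x hj)). apply is_derive_unique. auto_derive; auto.
    replace (2*th*(eps + - (eps/2))) with (eps*th) by field. ring. }
  rewrite (sumk_const _ _ _ ds0) in k2. rewrite (sumk_const _ _ _ dse) in k3.
  rewrite d1 in k2. rewrite d2 in k3.
  unfold P, Q in k2, k3. unfold Ef, Of.
  apply (alg1 A D (2*th) (cos th) (sin th) (cos (eps*th)) (sin (eps*th)) (INR m)); auto; lra.
Qed.

Lemma q2 p : cos (PI/2 + p) = - sin p /\ sin (PI/2 + p) = cos p.
Proof. rewrite cos_plus, sin_plus, cos_PI2, sin_PI2. split; ring. Qed.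
Lemma q3 p : cos (PI + p) = - cos p /\ sin (PI + p) = - sin p.
Proof. rewrite Rplus_comm, neg_cos, neg_sin. auto. Qed.

Lemma quad p : 0 <= p <= PI/2 -> 0 <= sin p /\ 0 <= cos p /\ sin p * sin p + cos p * cos p = 1.
Proof. intros h. pose proof PI_RGT_0. split; [apply sin_ge_0; lra|split; [apply cos_ge_0; lra|]].
  pose proof (sin2_cos2 p). unfold Rsqr in H0. lra. Qed.

Lemma mono_q a b : 0 <= a < b -> b <= PI/2 -> sin a < sin b /\ cos b < cos a.
Proof. intros h1 h2. pose proof PI_RGT_0. split.
  apply sin_increasing_1; lra. apply cos_decreasing_1; lra. Qed.

Lemma small_pos eps th : 0 < eps < 1/4 -> 0 < th <= 3*PI/2 -> 0 < eps*th < PI/2.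
Proof. intros h1 h2. pose proof PI_RGT_0. split; nra. Qed.

Lemma small_sc eps th : 0 < eps < 1/4 -> 0 < th <= 3*PI/2 ->
  0 < sin (eps*th) /\ 0 < cos (eps*th).
Proof. intros h1 h2. pose proof (small_pos _ _ h1 h2). pose proof PI_RGT_0.
  split; [apply sin_gt_0|apply cos_gt_0]; lra. Qed.

Lemma small_mono eps a b : 0 < eps < 1/4 -> 0 < a < b -> b <= 3*PI/2 ->
  sin (eps*a) < sin (eps*b) /\ cos (eps*b) < cos (eps*a).
Proof. intros h1 h2 h3. pose proof (small_pos eps b h1 ltac:(lra)).
  assert (eps*a < eps*b) by nra. assert (0 < eps*a) by nra. apply mono_q; lra. Qed.

Lemma Ef_cont m eps : continuity (fun th => Ef m eps th).
Proof. intro x. apply continuity_pt_filterlim.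
  apply (ex_derive_continuous (K:=R_AbsRing) (V:=R_NormedModule)). unfold Ef. auto_derive; auto. Qed.
Lemma Of_cont m eps : continuity (fun th => Of m eps th).
Proof. intro x. apply continuity_pt_filterlim.
  apply (ex_derive_continuous (K:=R_AbsRing) (V:=R_NormedModule)). unfold Of. auto_derive; auto. Qed.

Lemma pos_comb s c x y M : 0 <= s -> 0 <= c -> s*s + c*c = 1 -> 0 < x -> 0 < y -> 1 <= M ->
  0 < s * x + M * c * y.
Proof. intros. destruct (Rle_lt_dec s 0).
  - assert (s = 0) by lra. subst. assert (0 < c) by nra. assert (0 < M*c) by nra. nra.
  - assert (0 < s*x) by nra. assert (0 <= M*c*y). { apply Rmult_le_pos; nra. } lra. Qed.

Section S.
Variables (m : nat) (eps : R).
Hypothesis hM : 1 <= INR m.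
Hypothesis he : 0 < eps < 1/4.

Lemma Ef_dec1 a b : 0 < a < b -> b <= PI/2 -> Ef m eps b < Ef m eps a.
Proof. intros h1 h2. pose proof PI_RGT_0.
  destruct (mono_q a b ltac:(lra) h2) as [s1 c1].
  destruct (small_mono eps a b he h1 ltac:(lra)) as [s2 c2].
  destruct (quad a ltac:(lra)) as [sa [ca _]]. destruct (quad b ltac:(lra)) as [sb [cb _]].
  destruct (small_sc eps a he ltac:(lra)) as [sea cea].
  destruct (small_sc eps b he ltac:(lra)) as [seb ceb].
  unfold Ef.
  assert (cos b * cos (eps*b) < cos a * cos (eps*a)) by nra.
  assert (sin a * sin (eps*a) < sin b * sin (eps*b)) by nra.
  nra.
Qed.

Lemma Ef_neg2 th : PI/2 <= th <= PI -> Ef m eps th < 0.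
Proof. intros h. pose proof PI_RGT_0.
  destruct (q2 (th - PI/2)) as [c s]. replace (PI/2 + (th - PI/2)) with th in c, s by ring.
  destruct (quad (th - PI/2) ltac:(lra)) as [sp [cp e]].
  destruct (small_sc eps th he ltac:(lra)) as [se ce].
  unfold Ef. rewrite c, s. pose proof (pos_comb _ _ _ _ _ sp cp e ce se hM). nra.
Qed.

Lemma Ef_inc3 a b : PI <= a < b -> b <= 3*PI/2 -> Ef m eps a < Ef m eps b.
Proof. intros h1 h2. pose proof PI_RGT_0.
  destruct (q3 (a - PI)) as [ca sa]. replace (PI + (a - PI)) with a in ca, sa by ring.
  destruct (q3 (b - PI)) as [cb sb]. replace (PI + (b - PI)) with b in cb, sb by ring.
  destruct (mono_q (a-PI) (b-PI) ltac:(lra) ltac:(lra)) as [s1 c1].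
  destruct (small_mono eps a b he ltac:(lra) ltac:(lra)) as [s2 c2].
  destruct (quad (a-PI) ltac:(lra)) as [spa [cpa _]]. destruct (quad (b-PI) ltac:(lra)) as [spb [cpb _]].
  destruct (small_sc eps a he ltac:(lra)) as [sea cea].
  destruct (small_sc eps b he ltac:(lra)) as [seb ceb].
  unfold Ef. rewrite ca, sa, cb, sb.
  assert (cos (b-PI) * cos (eps*b) < cos (a-PI) * cos (eps*a)) by nra.
  assert (sin (a-PI) * sin (eps*a) < sin (b-PI) * sin (eps*b)) by nra.
  nra.
Qed.

Lemma Of_pos1 th : 0 < th <= PI/2 -> 0 < Of m eps th.
Proof. intros h. pose proof PI_RGT_0.
  assert (0 < sin th) by (apply sin_gt_0; lra). destruct (quad th ltac:(lra)) as [_ [c _]].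
  destruct (small_sc eps th he ltac:(lra)) as [se ce]. unfold Of.
  assert (0 < INR m * sin th * cos (eps*th)) by (repeat apply Rmult_lt_0_compat; lra).
  assert (0 <= cos th * sin (eps*th)) by (apply Rmult_le_pos; lra). lra. Qed.

Lemma Of_dec2 a b : PI/2 <= a < b -> b <= PI -> Of m eps b < Of m eps a.
Proof. intros h1 h2. pose proof PI_RGT_0.
  destruct (q2 (a - PI/2)) as [ca sa]. replace (PI/2 + (a - PI/2)) with a in ca, sa by ring.
  destruct (q2 (b - PI/2)) as [cb sb]. replace (PI/2 + (b - PI/2)) with b in cb, sb by ring.
  destruct (mono_q (a-PI/2) (b-PI/2) ltac:(lra) ltac:(lra)) as [s1 c1].
  destruct (small_mono eps a b he ltac:(lra) ltac:(lra)) as [s2 c2].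
  destruct (quad (a-PI/2) ltac:(lra)) as [spa [cpa _]]. destruct (quad (b-PI/2) ltac:(lra)) as [spb [cpb _]].
  destruct (small_sc eps a he ltac:(lra)) as [sea cea].
  destruct (small_sc eps b he ltac:(lra)) as [seb ceb].
  unfold Of. rewrite ca, sa, cb, sb.
  assert (sin (a-PI/2) * sin (eps*a) < sin (b-PI/2) * sin (eps*b)) by nra.
  assert (cos (b-PI/2) * cos (eps*b) < cos (a-PI/2) * cos (eps*a)) by nra.
  nra.
Qed.

Lemma Of_neg3 th : PI <= th <= 3*PI/2 -> Of m eps th < 0.
Proof. intros h. pose proof PI_RGT_0.
  destruct (q3 (th - PI)) as [c s]. replace (PI + (th - PI)) with th in c, s by ring.
  destruct (quad (th - PI) ltac:(lra)) as [sp [cp e]].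
  destruct (small_sc eps th he ltac:(lra)) as [se ce].
  unfold Of. rewrite c, s. pose proof (pos_comb _ _ _ _ _ cp sp ltac:(lra) se ce hM). nra.
Qed.


Lemma ivt_root (f : R -> R) a b : continuity f -> a < b -> f a * f b < 0 ->
  exists t, a < t < b /\ f t = 0.
Proof. intros hc hab hs.
  assert (hy : Rmin (f a) (f b) <= 0 <= Rmax (f a) (f b)).
  { unfold Rmin, Rmax. destruct (Rle_dec (f a) (f b)); split; nra. }
  destruct (IVT_gen f a b 0 hc hy) as [t [ht e]].
  rewrite Rmin_left in ht by lra. rewrite Rmax_right in ht by lra.
  exists t. split; auto. split.
  - destruct (Req_dec t a) as [->|]; [rewrite e in hs; lra | lra].
  - destruct (Req_dec t b) as [->|]; [rewrite e in hs; lra | lra].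
Qed.

Lemma root1 : exists t, 0 < t < PI/2 /\ Ef m eps t = 0.
Proof. pose proof PI_RGT_0. apply ivt_root. apply Ef_cont. lra.
  unfold Ef at 1. rewrite Rmult_0_r, cos_0, sin_0.
  assert (Ef m eps (PI/2) < 0).
  { unfold Ef. rewrite cos_PI2, sin_PI2.
    destruct (small_sc eps (PI/2) he ltac:(lra)). nra. }
  nra.
Qed.

Lemma root2 : exists t, PI/2 < t < PI /\ Of m eps t = 0.
Proof. pose proof PI_RGT_0. apply ivt_root. apply Of_cont. lra.
  pose proof (Of_pos1 (PI/2) ltac:(lra)). pose proof (Of_neg3 PI ltac:(lra)). nra.
Qed.

Lemma root3 : exists t, PI < t < 3*PI/2 /\ Ef m eps t = 0.
Proof. pose proof PI_RGT_0. apply ivt_root. apply Ef_cont. lra.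
  pose proof (Ef_neg2 PI ltac:(lra)).
  assert (0 < Ef m eps (3*PI/2)).
  { destruct (q3 (PI/2)) as [c s]. replace (PI + PI/2) with (3*PI/2) in c, s by field.
    unfold Ef. rewrite c, s, cos_PI2, sin_PI2.
    destruct (small_sc eps (3*PI/2) he ltac:(lra)). nra. }
  nra.
Qed.

Lemma Ef_roots t1 t3 : 0 < t1 < PI/2 -> Ef m eps t1 = 0 -> PI < t3 < 3*PI/2 -> Ef m eps t3 = 0 ->
  forall t, 0 < t <= 3*PI/2 -> Ef m eps t = 0 -> t = t1 \/ t = t3.
Proof. intros h1 e1 h3 e3 t ht e. pose proof PI_RGT_0.
  destruct (Rle_lt_dec t (PI/2)).
  - left. destruct (Rtotal_order t t1) as [l|[q|l]]; auto.
    + pose proof (Ef_dec1 t t1 ltac:(lra) ltac:(lra)). lra.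
    + pose proof (Ef_dec1 t1 t ltac:(lra) ltac:(lra)). lra.
  - destruct (Rle_lt_dec t PI).
    + pose proof (Ef_neg2 t ltac:(lra)). lra.
    + right. destruct (Rtotal_order t t3) as [l|[q|l]]; auto.
      * pose proof (Ef_inc3 t t3 ltac:(lra) ltac:(lra)). lra.
      * pose proof (Ef_inc3 t3 t ltac:(lra) ltac:(lra)). lra.
Qed.

Lemma Of_roots t2 : PI/2 < t2 < PI -> Of m eps t2 = 0 ->
  forall t, 0 < t <= 3*PI/2 -> Of m eps t = 0 -> t = t2.
Proof. intros h2 e2 t ht e. pose proof PI_RGT_0.
  destruct (Rle_lt_dec t (PI/2)).
  - pose proof (Of_pos1 t ltac:(lra)). lra.
  - destruct (Rle_lt_dec t PI).
    + destruct (Rtotal_order t t2) as [l|[q|l]]; auto.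
      * pose proof (Of_dec2 t t2 ltac:(lra) ltac:(lra)). lra.
      * pose proof (Of_dec2 t2 t ltac:(lra) ltac:(lra)). lra.
    + pose proof (Of_neg3 t ltac:(lra)). lra.
Qed.

End S.

Definition feven eps th : gfun :=
  mkGfun (fun x => sin (2*th*x)) (fun x => sin (2*th*(1/2 - x)))
         (fun _ x => sin th / cos (eps*th) * cos (2*th*(x - eps/2))).
Definition fodd eps th : gfun :=
  mkGfun (fun x => sin (2*th*x)) (fun x => - sin (2*th*(1/2 - x)))
         (fun _ x => - sin th / sin (eps*th) * sin (2*th*(x - eps/2))).

Lemma ode_of (u du : R -> R) lam : (forall x, is_derive u x (du x)) ->
  (forall x, is_derive du x (- lam * u x)) -> edge_ode lam u.
Proof.
  intros h1 h2 x.
  assert (e : forall t, Derive u t = du t) by (intro t; apply is_derive_unique; auto).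
  split; [eexists; apply h1|split].
  - apply ex_derive_ext with du. intro t; symmetry; auto. eexists; apply h2.
  - rewrite (Derive_ext _ _ x e). rewrite (is_derive_unique _ _ _ (h2 x)). ring.
Qed.

Lemma sin_zero_small y : -PI < y < PI -> sin y = 0 -> y = 0.
Proof. intros h e. destruct (Rtotal_order y 0) as [l|[q|l]]; auto.
  - pose proof (sin_gt_0 (-y) ltac:(lra) ltac:(lra)). rewrite sin_neg in H. lra.
  - pose proof (sin_gt_0 y ltac:(lra) ltac:(lra)). lra. Qed.

Lemma sin_zero_pi y : 0 < y < 2*PI -> sin y = 0 -> y = PI.
Proof. intros h e. destruct (Rtotal_order y PI) as [l|[q|l]]; auto.
  - pose proof (sin_gt_0 y ltac:(lra) ltac:(lra)). lra.
  - pose proof (sin_gt_0 (y - PI) ltac:(lra) ltac:(lra)).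
    destruct (q3 (y - PI)) as [_ s]. replace (PI + (y - PI)) with y in s by ring. lra. Qed.

Lemma D1 th y : Derive (fun x => sin (2*th*x)) y = 2*th*cos (2*th*y).
Proof. apply is_derive_unique; auto_derive; auto; ring. Qed.
Lemma D2 th y : Derive (fun x => sin (2*th*(1/2 - x))) y = - (2*th) * cos (2*th*(1/2 - y)).
Proof. apply is_derive_unique; auto_derive; auto; unfold Rminus; ring. Qed.
Lemma D2n th y : Derive (fun x => - sin (2*th*(1/2 - x))) y = (2*th) * cos (2*th*(1/2 - y)).
Proof. apply is_derive_unique; auto_derive; auto; unfold Rminus; ring. Qed.
Lemma Dc c th e y : Derive (fun x => c * cos (2*th*(x - e))) y = - c * (2*th) * sin (2*th*(y - e)).
Proof. apply is_derive_unique; auto_derive; auto; unfold Rminus; ring. Qed.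
Lemma Ds c th e y : Derive (fun x => c * sin (2*th*(x - e))) y = c * (2*th) * cos (2*th*(y - e)).
Proof. apply is_derive_unique; auto_derive; auto; unfold Rminus; ring. Qed.

Section T.
Variables (m : nat) (eps : R).
Hypothesis hM : 1 <= INR m.
Hypothesis he : 0 < eps < 1/4.

Lemma even_eig th : 0 < th <= 3*PI/2 -> Ef m eps th = 0 -> is_eigfun m eps ((2*th)*(2*th)) (feven eps th).
Proof.
  intros hth hE. destruct (small_sc eps th he hth) as [se ce].
  assert (hk : 0 < 2*th) by lra.
  unfold feven, is_eigfun; simpl.
  split; [|split; [|split; [|split; [|split; [|split; [|split; [|split]]]]]]].
  - apply (ode_of _ (fun x => 2*th * cos (2*th*x))); intro x; auto_derive; auto; unfold Rminus; ring.
  - apply (ode_of _ (fun x => - (2*th) * cos (2*th*(1/2 - x)))); intro x; auto_derive; auto; unfold Rminus; ring.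
  - intros j hj. apply (ode_of _ (fun x => - (sin th / cos (eps*th)) * (2*th) * sin (2*th*(x - eps/2))));
      intro x; auto_derive; auto; unfold Rminus; ring.
  - rewrite Rmult_0_r; apply sin_0.
  - replace (2*th*(1/2 - 1/2)) with 0 by ring; apply sin_0.
  - intros j hj. replace (2*th*(0 - eps/2)) with (- (eps*th)) by field. rewrite cos_neg.
    replace (2*th*(1/2)) with th by field. field. lra.
  - intros j hj. replace (2*th*(eps - eps/2)) with (eps*th) by field.
    replace (2*th*(1/2 - 0)) with th by field. field. lra.
  - rewrite D1. erewrite sumk_const; [|intros; apply Dc].
    replace (2*th*(0 - eps/2)) with (- (eps*th)) by field. rewrite sin_neg.
    replace (2*th*(1/2)) with th by field.
    apply Rmult_eq_reg_l with (cos (eps*th)); [|lra].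
    transitivity (- (2*th) * Ef m eps th). unfold Ef. field. lra. rewrite hE. ring.
  - rewrite D2. erewrite sumk_const; [|intros; apply Dc].
    replace (2*th*(eps - eps/2)) with (eps*th) by field.
    replace (2*th*(1/2 - 0)) with th by field.
    apply Rmult_eq_reg_l with (cos (eps*th)); [|lra].
    transitivity (- (2*th) * Ef m eps th). unfold Ef. field. lra. rewrite hE. ring.
Qed.

Lemma odd_eig th : 0 < th <= 3*PI/2 -> Of m eps th = 0 -> is_eigfun m eps ((2*th)*(2*th)) (fodd eps th).
Proof.
  intros hth hE. destruct (small_sc eps th he hth) as [se ce].
  assert (hk : 0 < 2*th) by lra.
  unfold fodd, is_eigfun; simpl.
  split; [|split; [|split; [|split; [|split; [|split; [|split; [|split]]]]]]].
  - apply (ode_of _ (fun x => 2*th * cos (2*th*x))); intro x; auto_derive; auto; unfold Rminus; ring.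
  - apply (ode_of _ (fun x => (2*th) * cos (2*th*(1/2 - x)))); intro x; auto_derive; auto; unfold Rminus; ring.
  - intros j hj. apply (ode_of _ (fun x => - sin th / sin (eps*th) * (2*th) * cos (2*th*(x - eps/2))));
      intro x; auto_derive; auto; unfold Rminus; ring.
  - rewrite Rmult_0_r; apply sin_0.
  - replace (2*th*(1/2 - 1/2)) with 0 by ring; rewrite sin_0; ring.
  - intros j hj. replace (2*th*(0 - eps/2)) with (- (eps*th)) by field. rewrite sin_neg.
    replace (2*th*(1/2)) with th by field. field. lra.
  - intros j hj. replace (2*th*(eps - eps/2)) with (eps*th) by field.
    replace (2*th*(1/2 - 0)) with th by field. field. lra.
  - rewrite D1. erewrite sumk_const; [|intros; apply Ds].
    replace (2*th*(0 - eps/2)) with (- (eps*th)) by field. rewrite cos_neg.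
    replace (2*th*(1/2)) with th by field.
    apply Rmult_eq_reg_l with (sin (eps*th)); [|lra].
    transitivity (- (2*th) * Of m eps th). unfold Of. field. lra. rewrite hE. ring.
  - rewrite D2n. erewrite sumk_const; [|intros; apply Ds].
    replace (2*th*(eps - eps/2)) with (eps*th) by field.
    replace (2*th*(1/2 - 0)) with th by field.
    apply Rmult_eq_reg_l with (sin (eps*th)); [|lra].
    transitivity ((2*th) * Of m eps th). unfold Of. field. lra. rewrite hE. ring.
Qed.


Lemma even_simple th : 0 < th <= 3*PI/2 -> sin th <> 0 -> Ef m eps th = 0 -> Of m eps th <> 0 ->
  simple_eig m eps ((2*th)*(2*th)) (feven eps th).
Proof.
  intros hth hs hE hO. destruct (small_sc eps th he hth) as [se ce].
  split; [apply even_eig; auto|split].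
  - intros [h1 _]. specialize (h1 (1/2) ltac:(lra)). simpl in h1.
    replace (2*th*(1/2)) with th in h1 by field. auto.
  - intros g hg.
    destruct (structure m eps th g ltac:(lra) ltac:(lra) ltac:(apply (small_pos eps th he hth)) hg)
      as [A [D [U1 [U2 [US [e1 e2]]]]]].
    assert (AD : A = D).
    { destruct (Rmult_integral _ _ e2); [lra| contradiction]. }
    subst D. exists A. split; [|split].
    + intros x _. simpl. rewrite U1. reflexivity.
    + intros x _. simpl. rewrite U2. reflexivity.
    + intros j hj x _. simpl. rewrite US by auto. field. lra.
Qed.

Lemma odd_simple th : 0 < th <= 3*PI/2 -> sin th <> 0 -> Of m eps th = 0 -> Ef m eps th <> 0 ->
  simple_eig m eps ((2*th)*(2*th)) (fodd eps th).
Proof.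
  intros hth hs hO hE. destruct (small_sc eps th he hth) as [se ce].
  split; [apply odd_eig; auto|split].
  - intros [h1 _]. specialize (h1 (1/2) ltac:(lra)). simpl in h1.
    replace (2*th*(1/2)) with th in h1 by field. auto.
  - intros g hg.
    destruct (structure m eps th g ltac:(lra) ltac:(lra) ltac:(apply (small_pos eps th he hth)) hg)
      as [A [D [U1 [U2 [US [e1 e2]]]]]].
    assert (AD : D = - A).
    { destruct (Rmult_integral _ _ e1); [lra| contradiction]. }
    subst D. exists A. split; [|split].
    + intros x _. simpl. rewrite U1. reflexivity.
    + intros x _. simpl. rewrite U2. ring.
    + intros j hj x _. simpl. rewrite US by auto. field. lra.
Qed.

Lemma psi_even th : geq m eps (psi_comp eps (feven eps th)) (feven eps th).
Proof. split; [|split]; intros; simpl.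
  - f_equal. ring.
  - reflexivity.
  - assert (E0 : 2*th*(eps - x - eps/2) = - (2*th*(x - eps/2))) by field. rewrite E0, cos_neg. reflexivity.
Qed.

Lemma psi_odd th : geq m eps (psi_comp eps (fodd eps th)) (gopp (fodd eps th)).
Proof. split; [|split]; intros; simpl.
  - replace (2*th*(1/2 - (1/2 - x))) with (2*th*x) by ring. ring.
  - ring.
  - replace (2*th*(eps - x - eps/2)) with (- (2*th*(x - eps/2))) by field. rewrite sin_neg. ring.
Qed.


Lemma zeros_odd th : PI/2 < th < PI -> num_zeros m eps (fodd eps th) m.
Proof.
  intros hth. pose proof PI_RGT_0.
  destruct (small_sc eps th he ltac:(lra)) as [se ce].
  pose proof (small_pos eps th he ltac:(lra)) as sp.
  assert (sth : 0 < sin th) by (apply sin_gt_0; lra).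
  exists (map (fun j => PS j (eps/2)) (seq 0 m)). split; [|split].
  - apply NoDup_map_NoDup_ForallPairs. intros a b _ _ e; injection e; auto. apply seq_NoDup.
  - rewrite length_map, length_seq. reflexivity.
  - intros p. rewrite in_map_iff. split.
    + intros [j [<- hj]]. apply in_seq in hj. simpl. split. split; [lia|lra].
      replace (2*th*(eps/2 - eps/2)) with 0 by ring. rewrite sin_0. ring.
    + destruct p as [x|x|j x]; simpl; intros [hv e].
      * exfalso. assert (0 < sin (2*th*x)) by (apply sin_gt_0; nra). lra.
      * exfalso. assert (0 < sin (2*th*(1/2 - x))) by (apply sin_gt_0; nra). lra.
      * destruct hv as [hj hx].
        assert (Z : sin (2*th*(x - eps/2)) = 0).
        { assert (- sin th / sin (eps*th) <> 0).
          { unfold Rdiv. apply Rmult_integral_contrapositive. split. lra.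
            apply Rinv_neq_0_compat. lra. }
          destruct (Rmult_integral _ _ e); [contradiction|auto]. }
        apply sin_zero_small in Z; [|split; nra].
        exists j. split. f_equal.
        assert (x - eps/2 = 0). { destruct (Rmult_integral _ _ Z); lra. } lra.
        apply in_seq. lia.
Qed.

Lemma zeros_even th : PI < th < 3*PI/2 -> num_zeros m eps (feven eps th) 2.
Proof.
  intros hth. pose proof PI_RGT_0.
  destruct (small_sc eps th he ltac:(lra)) as [se ce].
  pose proof (small_pos eps th he ltac:(lra)) as sp.
  assert (sth : sin th < 0).
  { destruct (q3 (th - PI)) as [_ s]. replace (PI + (th - PI)) with th in s by ring.
    pose proof (sin_gt_0 (th - PI) ltac:(lra) ltac:(lra)). lra. }
  exists (PE1 (PI/(2*th)) :: PE2 (1/2 - PI/(2*th)) :: nil). split; [|split].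
  - constructor. simpl. intros [h|h]; [discriminate|contradiction].
    constructor. simpl; auto. constructor.
  - reflexivity.
  - assert (h1 : PI/(2*th) <= 1/2).
    { apply Rmult_le_reg_r with (2*th). lra. unfold Rdiv. rewrite Rmult_assoc, Rinv_l by lra. lra. }
    assert (h0 : 0 < PI/(2*th)) by (apply Rdiv_lt_0_compat; lra).
    intros p. simpl. split.
    + intros [<-|[<-|[]]]; simpl.
      * split. lra. replace (2*th*(PI/(2*th))) with PI by (field; lra). apply sin_PI.
      * split. lra. replace (2*th*(1/2 - (1/2 - PI/(2*th)))) with PI by (field; lra). apply sin_PI.
    + destruct p as [x|x|j x]; simpl; intros [hv e].
      * left. apply sin_zero_pi in e; [|split; nra]. f_equal. field_simplify_eq; lra.
      * right; left. apply sin_zero_pi in e; [|split; nra]. f_equal. field_simplify_eq; lra.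
      * exfalso. destruct hv as [hj hx].
        assert (0 < cos (2*th*(x - eps/2))) by (apply cos_gt_0; nra).
        assert (sin th / cos (eps*th) < 0).
        { unfold Rdiv. assert (0 < / cos (eps*th)) by (apply Rinv_0_lt_compat; lra). nra. }
        nra.
Qed.

End T.

Theorem lemma18 (m : nat) (hm : (1 <= m)%nat) :
  exists eps0, 0 < eps0 /\
  forall eps, 0 < eps < eps0 ->
  exists (lam1 lam2 lam3 : R) (f1 f2 f3 : gfun),
    lam1 < lam2 < lam3 /\
    (* the first three eigenvalues, all simple, with eigenfunctions f1 f2 f3 *)
    simple_eig m eps lam1 f1 /\ simple_eig m eps lam2 f2 /\
    simple_eig m eps lam3 f3 /\
    (forall mu, is_eigenvalue m eps mu -> mu <= lam3 ->
       mu = lam1 \/ mu = lam2 \/ mu = lam3) /\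
    geq m eps (psi_comp eps f2) (gopp f2) /\ num_zeros m eps f2 m /\
    geq m eps (psi_comp eps f3) f3 /\ num_zeros m eps f3 2.
Proof.
  exists (1/4). split; [lra|]. intros eps he.
  assert (hM : 1 <= INR m) by (apply (le_INR 1 m) in hm; simpl in hm; lra).
  pose proof PI_RGT_0.
  destruct (root1 m eps hM he) as [t1 [h1 e1]].
  destruct (root2 m eps hM he) as [t2 [h2 e2]].
  destruct (root3 m eps hM he) as [t3 [h3 e3]].
  exists ((2*t1)*(2*t1)), ((2*t2)*(2*t2)), ((2*t3)*(2*t3)), (feven eps t1), (fodd eps t2), (feven eps t3).
  split; [split; nra|].
  split.
  { apply even_simple; auto; try lra.
    pose proof (sin_gt_0 t1 ltac:(lra) ltac:(lra)); lra.
    pose proof (Of_pos1 m eps hM he t1 ltac:(lra)); lra. }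
  split.
  { apply odd_simple; auto; try lra.
    pose proof (sin_gt_0 t2 ltac:(lra) ltac:(lra)); lra.
    pose proof (Ef_neg2 m eps hM he t2 ltac:(lra)); lra. }
  split.
  { apply even_simple; auto; try lra.
    destruct (q3 (t3 - PI)) as [_ s]. replace (PI + (t3 - PI)) with t3 in s by ring.
    pose proof (sin_gt_0 (t3 - PI) ltac:(lra) ltac:(lra)). lra.
    pose proof (Of_neg3 m eps hM he t3 ltac:(lra)); lra. }
  split.
  { intros mu [g [hg hnz]] hle.
    destruct (Rle_lt_dec mu 0) as [hn|hp].
    { exfalso. apply hnz. apply (no_nonpos m eps mu g); auto; lra. }
    set (th := sqrt mu / 2).
    assert (emu : mu = (2*th)*(2*th)).
    { unfold th. replace (2 * (sqrt mu / 2)) with (sqrt mu) by field. rewrite sqrt_sqrt; lra. }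
    assert (hth : 0 < th) by (unfold th; pose proof (sqrt_lt_R0 mu hp); lra).
    assert (hth3 : th <= t3).
    { unfold th. assert (sqrt mu <= sqrt ((2*t3)*(2*t3))) by (apply sqrt_le_1_alt; lra).
      rewrite sqrt_square in H0 by lra. lra. }
    rewrite emu in hg.
    destruct (structure m eps th g hth ltac:(lra) ltac:(apply (small_pos eps th he); lra) hg)
      as [A [D [U1 [U2 [US [f1 f2]]]]]].
    destruct (Req_dec (Ef m eps th) 0) as [hE|hE].
    { destruct (Ef_roots m eps hM he t1 t3 h1 e1 h3 e3 th ltac:(lra) hE) as [->| ->];
        rewrite emu; auto. }
    destruct (Req_dec (Of m eps th) 0) as [hO|hO].
    { rewrite (Of_roots m eps hM he t2 h2 e2 th ltac:(lra) hO) in emu. auto. }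
    exfalso. apply hnz.
    assert (A + D = 0) by (destruct (Rmult_integral _ _ f1); [auto|contradiction]).
    assert (A - D = 0) by (destruct (Rmult_integral _ _ f2); [auto|contradiction]).
    assert (A = 0) by lra. assert (D = 0) by lra.
    split; [|split]; simpl.
    - intros x _. rewrite U1, H2. ring.
    - intros x _. rewrite U2, H3. ring.
    - intros j hj x _. rewrite US by auto. rewrite H2, H3. field.
      destruct (small_sc eps th he ltac:(lra)). lra. }
  split; [apply psi_odd|].
  split; [apply zeros_odd; auto|].
  split; [apply psi_even|].
  apply zeros_even; auto.
Qed.
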